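(* Let $F$ be a graph with $\gamma(F)=1$ and $k = |E(F)| \geq 3$. Let $G$ be either a pure $(m,F)$-special graph or a copy of $F+e$ for some $e \in E(\overline{F})$. Then: (a) for every $x \in V(G)$, $G$ has a minimum $F$-isolating set $D$ with $x \in D$; (b) if $G$ is a pure $(m,F)$-special graph and $x \in V(G)$ is such that $x$ is not a vertex of the quotient graph in any representation of $G$ as a pure $(m,F)$-special graph, then $\iota(G-x,F) = \iota(G,F) - 1$.
   Context: All graphs are finite and simple. For $D \subseteq V(G)$, $N_G[D]$ is the closed neighbourhood of $D$; $G-x$ is $G$ with vertex $x$ deleted. A set $D \subseteq V(G)$ is an $F$-isolating set of $G$ if $G - N_G[D]$ contains no subgraph isomorphic to $F$; $\iota(G,F)$ is the minimum size of such a set, and a minimum $F$-isolating set is one of this size. $\gamma(F)=1$ means $F$ has a vertex adjacent to all other vertices of $F$. $\overline{F}$ is the complement of $F$ and $F+e = (V(F),E(F)\cup\{e\})$. A pure $(m,F)$-special graph is a graph obtained as follows: $m+1 = q(k+2)$ for an integer $q\ge 1$; take a tree $T$ with $q$ vertices $v_1,\dots,v_q$, pairwise disjoint copies $F_1,\dots,F_q$ of $F$ disjoint from $V(T)$, and vertices $w_i\in V(F_i)$; the graph has vertex set $V(T)\cup\bigcup_i V(F_i)$ and edge set $E(T)\cup\bigcup_i (E(F_i)\cup\{v_iw_i\})$. A choice of such $T, F_i, w_i$ is a representation of the graph; $T$ is its quotient graph, the subgraph $G_i$ with vertex set $\{v_i\}\cup V(F_i)$ and edge set $E(F_i)\cup\{v_iw_i\}$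 is an $F$-constituent, and $v_i$ is its $F$-connection. (For such a graph, $\iota(G,F) = q$.) *)

(* Defs.v *)
From mathcomp Require Import all_boot.
Set Implicit Arguments. Unset Strict Implicit. Unset Printing Implicit Defensive.

Record sgraph := SGraph {
  vert :> finType;
  adj : rel vert;
  adj_sym : symmetric adj;
  adj_irr : irreflexive adj }.

Arguments adj {s}.

Definition edges (G : sgraph) : {set {set G}} :=
  [set e : {set G} | [exists u : G, exists v : G, adj u v && (e == [set u; v])]].

Definition cnbhd (G : sgraph) (D : {set G}) : {set G} :=
  D :|: [set v : G | [exists u in D, adj u v]].

Section Induced.
Variables (G : sgraph) (S : {set G}).
Definition ind_type : finType := {y : G | y \in S}.
Definition ind_adj : rel ind_type := fun a b => adj (val a) (val b).
Lemma ind_adj_sym : symmetric ind_adj.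
Proof. by move=> a b; rewrite /ind_adj adj_sym. Qed.
Lemma ind_adj_irr : irreflexive ind_adj.
Proof. by move=> a; rewrite /ind_adj adj_irr. Qed.
Definition induced : sgraph := SGraph ind_adj_sym ind_adj_irr.
End Induced.

Definition minus_cnbhd (G : sgraph) (D : {set G}) : sgraph := induced (~: cnbhd D).
Definition delete (G : sgraph) (x : G) : sgraph := induced [set~ x].

Definition has_copy (F H : sgraph) : bool :=
  [exists f : {ffun F -> H},
     injectiveb f && [forall u : F, forall v : F, adj u v ==> adj (f u) (f v)]].

Definition isolating (F G : sgraph) (D : {set G}) : bool :=
  ~~ has_copy F (minus_cnbhd D).

Definition iotaF (F G : sgraph) : nat :=
  \big[minn/#|G|]_(D : {set G} | isolating F D) #|D|.

Definition min_isolating (F G : sgraph) (D : {set G}) : Prop :=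
  isolating F D /\ #|D| = iotaF F G.

Definition graph_iso (G H : sgraph) (f : G -> H) : Prop :=
  bijective f /\ forall u v : G, adj (f u) (f v) = adj u v.

Definition isomorphic (G H : sgraph) : Prop := exists f : G -> H, graph_iso f.

(* Trees: connected and acyclic. A cycle is a duplicate-free cyclic sequence
   of at least 3 vertices, consecutive ones adjacent. *)
Definition is_tree (T : sgraph) : Prop :=
  (forall u v : T, connect adj u v) /\
  ~ (exists c : seq T, (2 < size c) && ucycleb adj c).

Section PlusEdge.
Variables (F : sgraph) (a b : F).
Definition pe_adj : rel F := fun u v =>
  adj u v || ((u != v) && (((u == a) && (v == b)) || ((u == b) && (v == a)))).
Lemma pe_adj_sym : symmetric pe_adj.
Proof.
move=> u v; rewrite /pe_adj adj_sym [v == u]eq_sym.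
by case: (u == a) (v == a) (u == b) (v == b) => [] [] [] [].
Qed.
Lemma pe_adj_irr : irreflexive pe_adj.
Proof. by move=> u; rewrite /pe_adj adj_irr eqxx. Qed.
Definition plus_edge : sgraph := SGraph pe_adj_sym pe_adj_irr.
End PlusEdge.

(* The pure special graph built from a tree T (quotient graph, vertices v_i),
   copies F_i = {i} x V(F) of F, and attachment vertices w i in F_i:
   vertex set V(T) + V(T) x V(F). *)
Section Special.
Variables (T F : sgraph) (w : T -> F).
Definition sp_type : finType := (T + (T * F))%type.
Definition sp_adj : rel sp_type := fun a b =>
  match a, b with
  | inl i, inl j => adj i j
  | inr (i, u), inr (j, v) => (i == j) && adj u v
  | inl i, inr (j, v) => (i == j) && (v == w i)
  | inr (j, v), inl i => (i == j) && (v == w i)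
  end.
Lemma sp_adj_sym : symmetric sp_adj.
Proof.
move=> [i|[i u]] [j|[j v]] //=; first exact: adj_sym.
by rewrite eq_sym adj_sym.
Qed.
Lemma sp_adj_irr : irreflexive sp_adj.
Proof. by move=> [i|[i u]] /=; rewrite adj_irr ?andbF. Qed.
Definition special_graph : sgraph := SGraph sp_adj_sym sp_adj_irr.
End Special.

(* A representation of G as a pure (m,F)-special graph: a tree T with
   q = #|T| vertices, m+1 = q(k+2) with k = |E(F)|, attachment vertices w,
   and an isomorphism phi identifying the construction with G
   (so phi (inl i) are the vertices of the quotient graph, i.e. the
   F-connections, in this representation). *)
Definition pure_rep (m : nat) (F G : sgraph) (T : sgraph) (w : T -> F)
    (phi : special_graph w -> G) : Prop :=
  is_tree T /\ m.+1 = #|T| * (#|edges F| + 2) /\ graph_iso phi.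
Arguments pure_rep : clear implicits.

Definition pure_special (m : nat) (F G : sgraph) : Prop :=
  exists (T : sgraph) (w : T -> F) (phi : special_graph w -> G), pure_rep m F G T w phi.

Definition gamma_one (F : sgraph) : Prop :=
  exists c : F, forall v : F, v != c -> adj c v.

(* Main.v *)
Require Import Defs.
From mathcomp Require Import all_boot zify.
Set Implicit Arguments. Unset Strict Implicit. Unset Printing Implicit Defensive.

Section General.
Variable F : sgraph.

Lemma iota_le (G : sgraph) (D : {set G}) : isolating F D -> iotaF F G <= #|D|.
Proof.
move=> HD; rewrite /iotaF; have : D \in index_enum {set G} := mem_index_enum D.
elim: (index_enum _) => [//|D' s IH]; rewrite inE big_cons => /orP [/eqP <-|hs].
  by rewrite HD geq_minl.
by case: ifP => _; rewrite ?geq_min IH ?orbT.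
Qed.

Lemma iota_eq (G : sgraph) (D0 : {set G}) : isolating F D0 ->
  (forall D : {set G}, isolating F D -> #|D0| <= #|D|) -> iotaF F G = #|D0|.
Proof.
move=> H0 Hmin; apply/eqP; rewrite eqn_leq iota_le //=.
rewrite /iotaF; apply: (big_ind (fun m => #|D0| <= m)) => //.
- exact: max_card.
- by move=> a b Ha Hb; rewrite leq_min Ha Hb.
Qed.

Lemma copy_lift (G : sgraph) (S : {set G}) (f : F -> G) :
  injective f -> (forall u v, adj u v -> adj (f u) (f v)) -> (forall u, f u \in S) ->
  has_copy F (induced S).
Proof.
move=> finj fhom fS.
apply/existsP; exists [ffun u => (exist _ (f u) (fS u) : induced S)].
apply/andP; split.
- apply/injectiveP => u v; rewrite !ffunE => /(congr1 val) /=; exact: finj.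
- apply/forallP => u; apply/forallP => v; apply/implyP => huv; rewrite !ffunE; exact: fhom.
Qed.

Lemma not_isolating (G : sgraph) (D : {set G}) (f : F -> G) :
  injective f -> (forall u v, adj u v -> adj (f u) (f v)) ->
  (forall u, f u \notin cnbhd D) -> ~~ isolating F D.
Proof.
move=> finj fhom fD; rewrite /isolating negbK; apply: (copy_lift finj fhom) => u.
by rewrite inE.
Qed.

Lemma isolating_crit (G : sgraph) (D : {set G}) (c : F) :
  (forall v : F, v != c -> adj c v) ->
  (forall y : G, y \notin cnbhd D ->
     #|[set z | z \notin cnbhd D & (z == y) || adj y z]| < #|F|) ->
  isolating F D.
Proof.
move=> hc hcrit; apply/negP => /existsP [f /andP [/injectiveP finj /forallP fhom]].
have hv : forall u, val (f u) \notin cnbhd D.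
  by move=> u; have := valP (f u); rewrite inE.
have := hcrit _ (hv c); rewrite ltnNge => /negP; apply.
have vinj : injective (fun u => val (f u)) by move=> u v /val_inj; exact: finj.
rewrite -cardsT -(card_imset _ vinj); apply: subset_leq_card.
apply/subsetP => z /imsetP [u _ ->]; rewrite inE hv /=.
case: (eqVneq u c) => [->|huc]; first by rewrite eqxx.
have := fhom c => /forallP /(_ u) /implyP /(_ (hc u huc)) => h.
have h2 : adj (sval (f c)) (sval (f u)) := h. by rewrite h2 orbT.
Qed.

Lemma card_ge3 : 3 <= #|edges F| -> 3 <= #|F|.
Proof.
move=> he; have: #|edges F| <= 'C(#|F|, 2).
  rewrite -card_draws; apply: subset_leq_card; apply/subsetP => e.
  rewrite !inE => /existsP [u /existsP [v /andP [huv /eqP ->]]].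
  rewrite cards2; case: (eqVneq u v) huv => [->|] //; by rewrite adj_irr.
move=> /(leq_trans he); case: #|F| => [|[|[|n]]] //.
Qed.

End General.

Lemma inD_cn (H : sgraph) (D : {set H}) z : z \in D -> z \in cnbhd D.
Proof. by rewrite /cnbhd inE => ->. Qed.

Lemma adj_cn (H : sgraph) (D : {set H}) d z : d \in D -> adj d z -> z \in cnbhd D.
Proof. by move=> hd hz; rewrite /cnbhd !inE; apply/orP; right; apply/exists_inP; exists d. Qed.

Section Special.
Variables (F : sgraph) (c : F) (T : sgraph) (w : T -> F) (G : sgraph)
  (phi : special_graph w -> G) (psi : G -> special_graph w).
Hypothesis hc : forall v : F, v != c -> adj c v.
Hypothesis hF3 : 3 <= #|F|.
Hypothesis Tconn : forall u v : T, connect adj u v.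
Hypothesis phiK : cancel phi psi.
Hypothesis psiK : cancel psi phi.
Hypothesis phiadj : forall a b, adj (phi a) (phi b) = adj a b.

Notation S := (special_graph w).

Lemma phi_inj : injective phi. Proof. exact: can_inj phiK. Qed.

Lemma adjG z z' : adj z z' = adj (psi z) (psi z').
Proof. by rewrite -{1}(psiK z) -{1}(psiK z') phiadj. Qed.

Definition blk (b : S) : T := match b with inl i => i | inr p => p.1 end.

Lemma adj_blk i u z : adj z (phi (inr (i, u))) -> blk (psi z) = i.
Proof. by rewrite adjG phiK; case: (psi z) => [j|[j v]] /= /andP [/eqP ->]. Qed.

Lemma eq_blk i u z : z = phi (inr (i, u)) -> blk (psi z) = i.
Proof. by move=> ->; rewrite phiK. Qed.

Lemma Tnb : 1 < #|T| -> forall i : T, exists2 j, adj i j & j != i.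
Proof.
move=> hT i; have : 0 < #|[set~ i]| by rewrite cardsC1; case: #|T| hT => [|[|n]].
case/card_gt0P => j; rewrite !inE => hji.
case/connectP: (Tconn i j) => p; case: p => [_ hl | j' p /= /andP [hij' _] _].
  by rewrite hl eqxx in hji.
exists j' => //; apply/eqP => e; by rewrite e adj_irr in hij'.
Qed.

Lemma T1 : #|T| <= 1 -> forall i j : T, i = j.
Proof. by move=> /fintype_le1P h i j; rewrite (h i) (h j). Qed.

Definition B (j : T) : {set S} := inl j |: [set inr (j, u) | u : F].

Lemma card_B j : #|B j| = #|F|.+1.
Proof.
rewrite cardsU1 card_imset; last by move=> u v [].
have -> : inl j \notin [set inr (j, u) | u : F] by apply/imsetP => [[u _]].
by rewrite cardT.
Qed.

Lemma nb_B j v b : (b == inr (j, v)) || adj (inr (j, v) : S) b -> b \in B j.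
Proof.
case: b => [i|[i u]] /=; rewrite !inE.
  by move=> /andP [/eqP -> _]; rewrite eqxx.
move=> /orP [/eqP [-> _] | /andP [/eqP <- _]]; apply/orP; right; apply/imsetP; by exists u.
Qed.

Lemma block_bound (R : {set G}) j v a1 a2 :
  a1 \in B j -> a2 \in B j -> a1 != a2 -> phi a1 \in R -> phi a2 \in R ->
  #|[set z | z \notin R & (z == phi (inr (j, v))) || adj (phi (inr (j, v))) z]| < #|F|.
Proof.
move=> h1 h2 h12 r1 r2.
set Y := [set z | _].
have sub : Y \subset (phi @: B j) :\ phi a1 :\ phi a2.
  apply/subsetP => z; rewrite !inE => /andP [hzR hz].
  apply/and3P; split.
  - by apply: contraNneq hzR => ->.
  - by apply: contraNneq hzR => ->.
  - rewrite -(psiK z); apply: imset_f; apply: (@nb_B j v).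
    by rewrite -(inj_eq phi_inj) psiK -(phiK (inr (j, v))) -adjG psiK.
have e1 := cardsD1 (phi a1) (phi @: B j).
have e2 := cardsD1 (phi a2) (phi @: B j :\ phi a1).
rewrite imset_f // in e1; rewrite !inE (inj_eq phi_inj) eq_sym h12 imset_f // in e2.
rewrite card_imset ?card_B in e1; last exact: phi_inj.
have := subset_leq_card sub; lia.
Qed.


Lemma hit (D : {set G}) i : isolating F D -> exists2 d, d \in D & blk (psi d) = i.
Proof.
move=> hD.
case: (boolP [exists d in D, blk (psi d) == i]) => [/exists_inP [d hd /eqP hb] | hn].
  by exists d.
exfalso; move: hD; apply/negP.
apply: (@not_isolating F G D (fun u => phi (inr (i, u)))).
- by move=> u u' /phi_inj [].
- by move=> u u' huu'; rewrite phiadj /= eqxx huu'.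
- move=> u; rewrite /cnbhd !inE negb_or; apply/andP; split.
    apply/negP => hin; move/negP: hn; apply; apply/exists_inP.
    by exists (phi (inr (i, u))) => //; rewrite phiK.
  apply/negP => /exists_inP [d hd hadj]; move/negP: hn; apply; apply/exists_inP.
  by exists d => //; rewrite (adj_blk hadj).
Qed.

Lemma LB (D : {set G}) : isolating F D -> #|T| <= #|D|.
Proof.
move=> hD.
have : [set: T] \subset (fun d => blk (psi d)) @: D.
  by apply/subsetP => i _; have [d hd hb] := hit i hD; apply/imsetP; exists d.
by move/subset_leq_card; rewrite cardsT => h; exact: leq_trans h (leq_imset_card _ _).
Qed.


Lemma partA (x : G) : exists D : {set G},
  [/\ isolating F D, #|D| = #|T| & x \in D].
Proof.
set i := blk (psi x).
set Q := [set phi (inl j) | j in [set~ i]].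
exists (x |: Q).
have xQ : x \notin Q.
  apply/imsetP => [[j hj hx]]; rewrite !inE in hj.
  by move: hj; rewrite /i hx phiK /= eqxx.
have cQ : #|Q| = #|T|.-1.
  by rewrite card_imset ?cardsC1 // => j j' /phi_inj [].
have Tpos : 0 < #|T| by apply/card_gt0P; exists i.
have memD j : j != i -> phi (inl j) \in x |: Q.
  by move=> hj; apply: setU1r; apply/imsetP; exists j; rewrite ?inE.
split; last by rewrite setU11.
  2: by rewrite cardsU1 xQ cQ add1n prednK.
set D := x |: Q.
apply: (isolating_crit hc) => y.
rewrite -(psiK y); case: (psi y) => [j | [j v]] hy.
- case: (eqVneq j i) => [ej | nj]; last by rewrite (inD_cn (memD _ nj)) in hy.
  case ex: (psi x) => [i' | [i' u]].
    have ei : i = i' by rewrite /i ex.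
    have : phi (inl j) \in D by rewrite ej ei -ex psiK setU11.
    by move/inD_cn; rewrite (negbTE hy).
  have ei : i = i' by rewrite /i ex.
  case: (ltnP 1 #|T|) => hT.
    have [j' hj' nj'] := Tnb hT j.
    have : phi (inl j) \in cnbhd D.
      apply: (@adj_cn _ _ (phi (inl j'))); first by apply: memD; rewrite -ej.
      by rewrite phiadj /= adj_sym.
    by rewrite (negbTE hy).
  apply: leq_ltn_trans hF3.
  have : [set z | z \notin cnbhd D & (z == phi (inl j)) || adj (phi (inl j)) z]
      \subset [set phi (inl j); phi (inr (j, w j))].
    apply/subsetP => z; rewrite !inE => /andP [_ /orP [-> // | hadj]].
    move: hadj; rewrite -(psiK z) phiadj; case: (psi z) => [j'' | [j'' v]] /=.
      by rewrite -(T1 hT j j'') adj_irr.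
    by move=> /andP [/eqP <- /eqP ->]; rewrite eqxx orbT.
  move/subset_leq_card; rewrite cards2 => h; apply: (leq_trans h).
  by case: (_ != _).
- have case1 : phi (inl j) \in D ->
    #|[set z | z \notin cnbhd D & (z == phi (inr (j, v))) || adj (phi (inr (j, v))) z]| < #|F|.
    move=> hjD; apply: ((@block_bound _ _ _ (inl j) (inr (j, w j)))).
    + by rewrite !inE eqxx.
    + by apply: setU1r; apply: imset_f.
    + by [].
    + exact: inD_cn.
    + by apply: (adj_cn hjD); rewrite phiadj /= !eqxx.
  case: (eqVneq j i) => [ej | nj]; last exact: case1 (memD _ nj).
  case ex: (psi x) => [i' | [i' u]].
    have ei : i = i' by rewrite /i ex.
    by apply: case1; rewrite ej ei -ex psiK setU11.
  have ei : i = i' by rewrite /i ex.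
  have xe : x = phi (inr (j, u)) by rewrite ej ei -ex psiK.
  have xD : x \in D := setU11 _ _.
  case: (ltnP 1 #|T|) => hT.
    have [j' hj' nj'] := Tnb hT j.
    apply: ((@block_bound _ _ _ (inr (j, u)) (inl j))).
    + by apply: setU1r; apply: imset_f.
    + by rewrite !inE eqxx.
    + by [].
    + by rewrite -xe inD_cn.
    + apply: (@adj_cn _ _ (phi (inl j'))); first by apply: memD; rewrite -ej.
      by rewrite phiadj /= adj_sym.
  case: (eqVneq u c) => [uc | nuc].
    have nvu : v != u.
      apply/eqP => e; move: hy; rewrite e -xe.
      by rewrite (inD_cn xD).
    have : phi (inr (j, v)) \in cnbhd D.
      by apply: (adj_cn xD); rewrite xe phiadj /= eqxx uc hc // -uc.
    by rewrite (negbTE hy).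
  apply: ((@block_bound _ _ _ (inr (j, u)) (inr (j, c)))).
  + by apply: setU1r; apply: imset_f.
  + by apply: setU1r; apply: imset_f.
  + by apply: contra nuc => /eqP [->].
  + by rewrite -xe inD_cn.
  + by apply: (adj_cn xD); rewrite xe phiadj /= eqxx adj_sym hc.
Qed.

Section Del.
Variable x : G.
Hypothesis hx : forall j, phi (inl j) != x.
Let i := blk (psi x).

Lemma hit' (D : {set delete x}) j : isolating F D -> j != i ->
  exists2 d, d \in D & blk (psi (val d)) = j.
Proof.
move=> hD nj.
case: (boolP [exists d in D, blk (psi (val d)) == j]) => [/exists_inP [d hd /eqP hb] | hn].
  by exists d.
exfalso; move: hD; apply/negP.
have prf u : phi (inr (j, u)) \in [set~ x].
  rewrite !inE; apply/eqP => e; move: nj; by rewrite /i -e phiK eqxx.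
apply: (@not_isolating F (delete x) D (fun u => exist _ (phi (inr (j, u))) (prf u))).
- by move=> u u' /(congr1 val) /= /phi_inj [].
- by move=> u u' huu'; rewrite /= /ind_adj /= phiadj /= eqxx huu'.
- move=> u; rewrite /cnbhd !inE negb_or; apply/andP; split.
    apply/negP => hin; move/negP: hn; apply; apply/exists_inP.
    by exists (exist _ (phi (inr (j, u))) (prf u)) => //=; rewrite phiK.
  apply/negP => /exists_inP [d hd hadj]; move/negP: hn; apply; apply/exists_inP.
  by exists d => //; rewrite (adj_blk hadj).
Qed.

Lemma LB' (D : {set delete x}) : isolating F D -> #|T|.-1 <= #|D|.
Proof.
move=> hD.
have : [set~ i] \subset (fun d => blk (psi (val d))) @: D.
  apply/subsetP => j; rewrite !inE => nj; have [d hd hb] := hit' hD nj.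
  by apply/imsetP; exists d.
by move/subset_leq_card; rewrite cardsC1 => h; exact: leq_trans h (leq_imset_card _ _).
Qed.

Lemma partB2 : 1 < #|T| -> iotaF F (delete x) = #|T|.-1.
Proof.
move=> hT.
set Q := [set phi (inl j) | j in [set~ i]].
have xQ : x \notin Q by apply/imsetP => [[j _ e]]; move: (hx j); rewrite e eqxx.
have cQ : #|Q| = #|T|.-1.
  by rewrite card_imset ?cardsC1 // => j j' /phi_inj [].
have memQ j : j != i -> phi (inl j) \in Q.
  by move=> hj; apply/imsetP; exists j; rewrite ?inE.
set D' : {set delete x} := [set z | val z \in Q].
have cD' : #|D'| = #|Q|.
  have <- : val @: D' = Q.
    apply/setP => z; apply/imsetP/idP => [[z' hz' ->] | hz]; first by rewrite inE in hz'.
    have hzx : z \in [set~ x].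
      by rewrite !inE; apply/eqP => e; move: xQ; rewrite -e hz.
    by exists (exist _ z hzx : delete x); rewrite ?inE.
  by rewrite card_imset //; exact: val_inj.
have lift (z' : delete x) : z' \notin cnbhd D' -> val z' \notin cnbhd Q.
  apply: contra; rewrite /cnbhd !inE => /orP [hq | /exists_inP [q hq hadj]].
    by rewrite hq.
  have hqx : q \in [set~ x] by rewrite !inE; apply/eqP => e; move: xQ; rewrite -e hq.
  apply/orP; right; apply/exists_inP; exists (exist _ q hqx : delete x) => //.
  by rewrite inE.
set R := x |: cnbhd Q.
have main y : y \notin cnbhd Q -> #|[set z | z \notin R & (z == y) || adj y z]| < #|F|.
  rewrite -(psiK y); case: (psi y) => [j | [j v]] hy.
  - case: (eqVneq j i) => [ej | nj]; last by rewrite (inD_cn (memQ _ nj)) in hy.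
    have [j' hj' nj'] := Tnb hT j.
    have : phi (inl j) \in cnbhd Q.
      apply: (@adj_cn _ _ (phi (inl j'))); first by apply: memQ; rewrite -ej.
      by rewrite phiadj /= adj_sym.
    by rewrite (negbTE hy).
  - case: (eqVneq j i) => [ej | nj].
      case ex: (psi x) => [i' | [i' u]].
        by move: (hx i'); rewrite -ex psiK eqxx.
      have ei : i = i' by rewrite /i ex.
      have [j' hj' nj'] := Tnb hT j.
      apply: ((@block_bound _ _ _ (inl j) (inr (i', u)))).
      + by rewrite !inE eqxx.
      + by apply: setU1r; rewrite ej ei; apply: imset_f.
      + by [].
      + apply: setU1r; apply: (@adj_cn _ _ (phi (inl j'))); first by apply: memQ; rewrite -ej.
        by rewrite phiadj /= adj_sym.
      + by rewrite -ex psiK setU11.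
    apply: ((@block_bound _ _ _ (inl j) (inr (j, w j)))).
    + by rewrite !inE eqxx.
    + by apply: setU1r; apply: imset_f.
    + by [].
    + by apply: setU1r; apply: inD_cn; apply: memQ.
    + by apply: setU1r; apply: (adj_cn (memQ _ nj)); rewrite phiadj /= !eqxx.
have iso : isolating F D'.
  apply: (isolating_crit hc) => y' hy'.
  apply: leq_ltn_trans (main _ (lift _ hy')).
  rewrite -(card_imset _ val_inj); apply: subset_leq_card.
  apply/subsetP => z /imsetP [z' hz' ->]; rewrite in_set in hz'; rewrite in_set.
  case/andP: hz' => h1 h2; rewrite /R in_setU1 negb_or (lift _ h1) andbT.
  have := valP z'; rewrite !inE => -> /=.
  case/orP: h2 => [/eqP -> | h]; first by rewrite eqxx.
  by apply/orP; right.
have e : iotaF F (delete x) = #|D'|.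
  by apply: (iota_eq iso) => D hD; rewrite cD' cQ; exact: LB'.
by rewrite e cD'.
Qed.

End Del.

Definition kap (u0 : F) (b : S) : F := match b with inl _ => u0 | inr p => p.2 end.

Section One.
Variables (m : nat) (x : G).
Hypothesis hrep : pure_rep m F G T w phi.
Hypothesis hyp : forall (w' : T -> F) (phi' : special_graph w' -> G),
  pure_rep m F G T w' phi' -> forall i, phi' (inl i) != x.
Hypothesis hT : #|T| <= 1.

Lemma partB1 : iotaF F (delete x) = 0.
Proof.
have iso : isolating F (set0 : {set delete x}).
  apply/negP => /existsP [f /andP [/injectiveP finj /forallP fhom]].
  pose g u : G := val (val (f u)).
  have ginj : injective g by move=> u v /val_inj /val_inj /finj.
  have ghom u v : adj u v -> adj (g u) (g v).
    by move=> huv; have := fhom u => /forallP /(_ v) /implyP /(_ huv) => hh; exact: hh.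
  have gx u : g u != x by have := valP (val (f u)); rewrite !inE.
  have [t0 [u0 ex]] : exists t0 u0, psi x = inr (t0, u0).
    case ex: (psi x) => [t0 | [t0 u0]]; last by exists t0, u0.
    by move: (hyp hrep t0); rewrite -ex psiK eqxx.
  have Tall (a b : T) : a = b := T1 hT a b.
  pose h u := psi (g u).
  have hinj : injective h by move=> u v /(can_inj psiK) /ginj.
  have hadj u v : adj (h u) (h v) = adj (g u) (g v) by rewrite /h -adjG.
  have hx0 u : h u != inr (t0, u0) by rewrite -ex /h (can_eq psiK) gx.
  pose pi u := kap u0 (h u).
  have piinj : injective pi.
    move=> u v; rewrite /pi.
    have := hx0 u; have := hx0 v; have := hinj u v.
    case: (h u) => [i1 | [i1 a1]]; case: (h v) => [i2 | [i2 a2]] /= H n2 n1 e.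
    - by apply: H; rewrite (Tall i1 i2).
    - by move: n2; rewrite -e (Tall i2 t0) eqxx.
    - by move: n1; rewrite e (Tall i1 t0) eqxx.
    - by apply: H; rewrite e (Tall i1 i2).
  pose E2 := [set p : F * F | adj p.1 p.2].
  pose Touch := [set p in E2 | (p.1 == u0) || (p.2 == u0)].
  pose Ex := if w t0 == u0 then set0 else [set (u0, w t0); (w t0, u0)].
  pose E3 := (E2 :\: Touch) :|: Ex.
  have ppinj : injective (fun p : F * F => (pi p.1, pi p.2)).
    by move=> [a1 b1] [a2 b2] /= [/piinj -> /piinj ->].
  have claim u v : adj (h u) (h v) -> (pi u, pi v) \in E3.
    rewrite /pi; have := hx0 u; have := hx0 v.
    case: (h u) => [i1 | [i1 a1]]; case: (h v) => [i2 | [i2 a2]] /= n2 n1 hh.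
    - by rewrite (Tall i1 i2) adj_irr in hh.
    - case/andP: hh => _ /eqP e.
      have hw : w t0 != u0 by move: n2; rewrite e (Tall i1 t0) (Tall i2 t0); apply: contra => /eqP ->.
      by apply/setUP; right; rewrite /Ex (negbTE hw) !inE e (Tall i1 t0) eqxx.
    - case/andP: hh => _ /eqP e.
      have hw : w t0 != u0 by move: n1; rewrite e (Tall i1 t0) (Tall i2 t0); apply: contra => /eqP ->.
      by apply/setUP; right; rewrite /Ex (negbTE hw) !inE e (Tall i2 t0) eqxx orbT.
    - case/andP: hh => _ hh.
      have na1 : a1 != u0 by move: n1; rewrite (Tall i1 t0); apply: contra => /eqP ->.
      have na2 : a2 != u0 by move: n2; rewrite (Tall i2 t0); apply: contra => /eqP ->.
      apply/setUP; left; apply/setDP; split; first by rewrite inE.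
      by rewrite !inE /= hh (negbTE na1) (negbTE na2).
  have sub : [set (pi p.1, pi p.2) | p in E2] \subset E3.
    apply/subsetP => q /imsetP [p hp ->]; apply: claim; rewrite hadj; apply: ghom.
    by rewrite inE in hp.
  have c1 : #|E2| <= #|E3|.
    by rewrite -(card_imset _ ppinj); exact: subset_leq_card.
  have TE : Touch \subset E2 by apply/subsetP => p; rewrite inE => /andP [].
  have cT := subset_leq_card TE.
  have c2 : #|E3| <= #|E2| - #|Touch| + #|Ex|.
    have := cardsUI (E2 :\: Touch) Ex; rewrite /E3 cardsD (setIidPr TE); lia.
  have [a ha] : exists a, adj u0 a.
    case: (eqVneq u0 c) => [e | ne]; last by exists c; rewrite adj_sym hc.
    have : 0 < #|[set~ c]| by rewrite cardsC1; lia.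
    case/card_gt0P => v; rewrite !inE => hv; exists v; rewrite e; exact: hc.
  have nau : (u0 == a) = false by apply/eqP => e; move: ha; rewrite e adj_irr.
  have t2 : 2 <= #|Touch|.
    have : [set (u0, a); (a, u0)] \subset Touch.
      apply/subsetP => p; rewrite !inE => /orP [/eqP -> | /eqP ->] /=.
        by rewrite ha eqxx.
      by rewrite adj_sym ha eqxx orbT.
    move/subset_leq_card; rewrite cards2 xpair_eqE nau /=; lia.
  have hw : w t0 != u0.
    apply/negP => /eqP e; move: c2; rewrite /Ex e eqxx cards0; lia.
  have cEx : #|Ex| <= 2.
    by rewrite /Ex (negbTE hw) cards2; case: (_ != _).
  have uniqn v : adj u0 v -> v = a.
    move=> hv; apply/eqP; apply: contraT => nva.
    have H3 : (u0, a) |: [set (a, u0); (u0, v)] \subset Touch.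
      apply/subsetP => p; rewrite !inE => /orP [/eqP -> | /orP [/eqP -> | /eqP ->]] /=.
      + by rewrite ha eqxx.
      + by rewrite adj_sym ha eqxx orbT.
      + by rewrite hv eqxx.
    have t3 : 3 <= #|Touch|.
      apply: leq_trans (subset_leq_card H3).
      by rewrite cardsU1 cards2 !inE !xpair_eqE nau eqxx /= [a == u0]eq_sym nau [a == v]eq_sym (negbTE nva).
    lia.
  have eq3 : [set (pi p.1, pi p.2) | p in E2] = E3.
    have c3 : #|E3| <= #|E2| by lia.
    by apply/eqP; rewrite eqEcard sub /= (card_imset _ ppinj).
  have refl u v : adj (g u) (g v) -> adj u v.
    rewrite -hadj => /claim; rewrite -eq3 => /imsetP [[a1 b1] hp [/piinj -> /piinj ->]].
    by rewrite inE in hp.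
  have [w' hw'] : exists w', pi w' = a.
    by case: (injF_bij piinj) => pinv _ pK; exists (pinv a); rewrite pK.
  have hwa : h w' = inr (t0, a).
    move: hw'; rewrite /pi; case: (h w') => [i1 | [i1 a1]] /= e.
      by move: nau; rewrite e eqxx.
    by rewrite e (Tall i1 t0).
  have xnb z : adj x z = (psi z == inr (t0, a)).
    rewrite adjG ex; case: (psi z) => [j | [j b]] /=.
      by rewrite (Tall j t0) eqxx /= eq_sym (negbTE hw).
    rewrite (Tall j t0) eqxx /=; apply/idP/eqP => [hb | [->]] //.
    by rewrite (uniqn _ hb).
  pose w2 := fun _ : T => w'.
  pose phi2 := fun b : special_graph w2 => match b with inl _ => x | inr p => g p.2 end.
  have phi2inj : injective phi2.
    move=> [i1 | [i1 a1]] [i2 | [i2 a2]] /= e.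
    - by rewrite (Tall i1 i2).
    - by move: (gx a2); rewrite -e eqxx.
    - by move: (gx a1); rewrite e eqxx.
    - by rewrite (ginj _ _ e) (Tall i1 i2).
  have phi2adj (a' b' : special_graph w2) : adj (phi2 a') (phi2 b') = adj a' b'.
    case: a' => [i1 | [i1 a1]]; case: b' => [i2 | [i2 a2]] /=.
    - by rewrite adj_irr (Tall i1 i2) adj_irr.
    - by rewrite xnb -hwa /h (inj_eq (can_inj psiK)) (inj_eq ginj) (Tall i1 i2) eqxx.
    - by rewrite adj_sym xnb -hwa /h (inj_eq (can_inj psiK)) (inj_eq ginj) (Tall i1 i2) eqxx.
    - rewrite (Tall i1 i2) eqxx /=; apply/idP/idP; [exact: refl | exact: ghom].
  have rep2 : pure_rep m F G T w2 phi2.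
    case: hrep => htree [hm _]; split => //; split => //; split => //.
    apply: inj_card_bij => //.
    by rewrite -(bij_eq_card (Bijective phiK psiK)).
  by move: (hyp rep2 t0); rewrite /= eqxx.
by have := iota_le iso; rewrite cards0 leqn0 => /eqP.
Qed.

End One.

End Special.

Theorem lemma3p4 (F : sgraph) (m : nat) (G : sgraph) :
  gamma_one F ->
  3 <= #|edges F| ->
  (pure_special m F G \/
   exists a b : F, [/\ a != b, ~~ adj a b & isomorphic G (plus_edge a b)]) ->
  (forall x : G, exists D : {set G}, min_isolating F D /\ x \in D) /\
  (pure_special m F G ->
   forall x : G,
     (forall (T : sgraph) (w : T -> F) (phi : special_graph w -> G),
        pure_rep m F G T w phi -> forall i : T, phi (inl i) != x) ->
     iotaF F (delete x) + 1 = iotaF F G).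
Proof.
move=> [c hc] hk3 hG; have hF3 := card_ge3 hk3.
split.
- move=> x; case: hG => [[T [w [phi [[Tconn _] [_ [phibij phiadj]]]]]] | [a [b [hab hnab [f [fbij fadj]]]]]].
  + case: phibij => psi phiK psiK.
    have [D [iso cD xD]] := partA hc hF3 Tconn phiK psiK phiadj x.
    exists D; split => //; split => //.
    by rewrite (iota_eq iso) // => D' hD'; rewrite cD; exact: (LB phiK psiK phiadj).
  + case: fbij => g fK gK.
    have cG : #|G| = #|F| := bij_eq_card (Bijective fK gK).
    have Gpos : 0 < #|G| by apply/card_gt0P; exists x.
    have iso : isolating F [set x].
      apply: (isolating_crit hc) => y hy.
      have xin : x \in cnbhd [set x] by rewrite inD_cn ?set11.
      apply: (@leq_ltn_trans #|[set~ x]|).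
        apply: subset_leq_card; apply/subsetP => z; rewrite in_set => /andP [hz _].
        by rewrite !inE; apply: contraNneq hz => ->.
      rewrite cardsC1 -cG; lia.
    exists [set x]; split; last by rewrite set11.
    split => //; rewrite (iota_eq iso) // => D hD.
    rewrite cards1 lt0n cards_eq0; apply/eqP => eD; move: hD; rewrite eD; apply/negP.
    apply: (@not_isolating F G set0 g).
    * exact: can_inj gK.
    * by move=> u v huv; rewrite -fadj !gK /= /pe_adj huv.
    * move=> u; rewrite /cnbhd !inE negb_or; apply/andP; split => //.
      by apply/negP => /exists_inP [d]; rewrite inE.
- move=> [T [w [phi rep]]] x hx.
  have rep' := rep; case: rep => [[Tconn _] [_ [phibij phiadj]]]; case: phibij => psi phiK psiK.
  have hxj j : phi (inl j) != x := hx T w phi rep' j.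
  have Tpos : 0 < #|T| by apply/card_gt0P; exists (blk (psi x)).
  have iG : iotaF F G = #|T|.
    have [D [iso cD xD]] := partA hc hF3 Tconn phiK psiK phiadj x.
    have e : iotaF F G = #|D|.
      by apply: (iota_eq iso) => D' hD'; rewrite cD; exact: (LB phiK psiK phiadj).
    by rewrite e cD.
  case: (ltnP 1 #|T|) => hT.
    by rewrite (partB2 hc hF3 Tconn phiK psiK phiadj hxj hT) iG addn1 prednK.
  rewrite (partB1 hc hF3 phiK psiK phiadj rep' (hx T) hT) iG; lia.
Qed.
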